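(* Fix integers $z_1>z_2\ge0$ and $k\ge1$. For every $m\ge0$, the number of $(z_1,z_2,k)$-asymmetric partitions of $m$ equals the number of partitions of $m$ of the form \[\lambda^{\{a_1,\dots,a_r\}}=\Big(z_1(r-1)+r,\underbrace{2r-1,\dots,2r-1}_{a_r},\underbrace{2r-3,\dots,2r-3}_{a_{r-1}-a_r},\dots,\underbrace{2k-1,\dots,2k-1}_{a_k-a_{k+1}},\underbrace{2k-2,\dots,2k-2}_{a_{k-1}-a_k},\dots,\underbrace{2,\dots,2}_{a_1-a_2},\underbrace{1,\dots,1}_{z_2}\Big)\] for some integer $r\ge k$ and integers $a_1>a_2>\dots>a_r\ge0$.
   Context: The Frobenius rank of a partition $\mu$ is $r=\max\{j:\mu_j\ge j\}$ and its Frobenius coordinates are $(\alpha\mid\beta)$ with $\alpha_i=\mu_i-i$, $\beta_i=\mu'_i-i$ ($1\le i\le r$, $\mu'$ the conjugate). For $1\le k\le r$, $\mu$ is $(z_1,z_2,k)$-asymmetric if $\mu=(\alpha_1,\dots,\alpha_r\mid\alpha_1+z_1,\dots,\widehat{\alpha_k+z_1},\dots,\alpha_r+z_1,z_2)$ for some strict partition $\alpha$, where the hat denotes omission (so the column coordinates are the decreasing arrangement of $\{\alpha_j+z_1:j\ne k\}\cup\{z_2\}$). *)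

(* Defs.v *)
From mathcomp Require Import all_boot.
From mathcomp Require Import boolp.

Set Implicit Arguments.
Unset Strict Implicit.
Unset Printing Implicit Defensive.

Definition is_part (s : seq nat) : bool :=
  sorted geq s && all (fun x => 0 < x) s.

Fixpoint seqs_upto (l b : nat) : seq (seq nat) :=
  match l with
  | 0 => [:: [::]]
  | l'.+1 => [::] :: [seq x :: s | x <- iota 1 b, s <- seqs_upto l' b]
  end.

Definition partitions (m : nat) : seq (seq nat) :=
  undup [seq s <- seqs_upto m m | is_part s && (sumn s == m)].

Definition npart (m : nat) (P : seq nat -> Prop) : nat :=
  count (fun s => `[< P s >]) (partitions m).

(* mu_j, 1-indexed (0 beyond the length). *)
Definition mu_at (mu : seq nat) (j : nat) : nat := nth 0 mu j.-1.

Definition conj_at (mu : seq nat) (i : nat) : nat := count (fun x => i <= x) mu.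

Definition frob_rank (mu : seq nat) : nat :=
  \max_(1 <= j < (size mu).+1 | j <= mu_at mu j) j.

Definition frob_row (mu : seq nat) : seq nat :=
  [seq mu_at mu i - i | i <- iota 1 (frob_rank mu)].
Definition frob_col (mu : seq nat) : seq nat :=
  [seq conj_at mu i - i | i <- iota 1 (frob_rank mu)].

Definition asym (z1 z2 k : nat) (mu : seq nat) : Prop :=
  1 <= k <= frob_rank mu /\
  exists alpha : seq nat,
    [/\ sorted (fun x y => y < x) alpha,
        size alpha = frob_rank mu,
        frob_row mu = alpha &
        frob_col mu =
          sort geq (z2 :: [seq nth 0 alpha j.-1 + z1
                          | j <- [seq j <- iota 1 (size alpha) | j != k]])].

(* lambda^{a_1,...,a_r}, with a = [:: a_1; ...; a_r] and a_{r+1} = 0. *)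
Definition lam (z1 z2 k r : nat) (a : seq nat) : seq nat :=
  (z1 * (r - 1) + r) ::
    flatten [seq nseq (nth 0 a i.-1 - nth 0 a i)
                      (if k <= i then (2 * i).-1 else 2 * i)
            | i <- rev (iota 1 r)]
    ++ nseq z2 1.

Definition lam_form (z1 z2 k : nat) (mu : seq nat) : Prop :=
  exists (r : nat) (a : seq nat),
    [/\ k <= r, size a = r, sorted (fun x y => y < x) a & mu = lam z1 z2 k r a].

(* Main.v *)
Require Import Defs.
From mathcomp Require Import all_boot.
From mathcomp Require Import boolp.
From mathcomp Require Import zify.

Set Implicit Arguments.
Unset Strict Implicit.
Unset Printing Implicit Defensive.


Lemma gtnT : transitive gtn.
Proof. by move=> y x z h1 h2; apply: ltn_trans h2 h1. Qed.

Lemma geqT : transitive geq.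
Proof. by move=> y x z h1 h2; apply: leq_trans h2 h1. Qed.

Lemma strict_step (a : seq nat) i : sorted gtn a -> i.+1 < size a ->
  nth 0 a i.+1 < nth 0 a i.
Proof. by move=> /(sortedP 0) H /H. Qed.

Lemma weak_step (a : seq nat) i : sorted gtn a -> nth 0 a i.+1 <= nth 0 a i.
Proof.
move=> Ha; case: (ltnP i.+1 (size a)) => Hi.
  by apply: ltnW; apply: strict_step.
by rewrite (nth_default 0 Hi).
Qed.

Lemma strict_gap (s : seq nat) i : sorted gtn s -> i < size s ->
  size s <= nth 0 s i + i.+1.
Proof.
elim: s i => [|x s IH] i //= Hs Hi.
have Hs' : sorted gtn s by apply: path_sorted Hs.
case: i Hi => [|i] Hi /=.
  case: s IH Hs Hs' {Hi} => [|y s] IH Hs Hs' /=; first lia.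
  move: Hs => /= /andP[Hxy _].
  have := IH 0 Hs' (ltn0Sn _) => /=. lia.
have := IH i Hs' Hi. lia.
Qed.

Lemma sorted_cat_geq (s1 s2 : seq nat) : sorted geq s1 -> sorted geq s2 ->
  (forall x y, x \in s1 -> y \in s2 -> y <= x) -> sorted geq (s1 ++ s2).
Proof.
rewrite !(sorted_pairwise geqT) pairwise_cat => H1 H2 H.
rewrite H1 H2 !andbT; apply/allrelP => x y; apply: H.
Qed.

Lemma sorted_nseq_geq n x : sorted geq (nseq n x).
Proof. by elim: n => [|[|n] IH] //=; rewrite leqnn. Qed.

Lemma sorted_flat (c e : nat -> nat) m n :
  (forall i j, i <= j -> c i <= c j) ->
  sorted geq (flatten [seq nseq (e i) (c i) | i <- rev (iota m n)]).
Proof.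
move=> Hc; elim: n => [|n IH] //.
rewrite -addn1 iotaD rev_cat /=.
apply: sorted_cat_geq => //; first exact: sorted_nseq_geq.
move=> x y; rewrite mem_nseq => /andP[_ /eqP ->] /flatten_mapP[i].
rewrite mem_rev mem_iota => Hi; rewrite mem_nseq => /andP[_ /eqP ->].
apply: Hc; lia.
Qed.

Lemma seqs_upto_mem l b s : size s <= l -> all (fun x => 0 < x <= b) s ->
  s \in seqs_upto l b.
Proof.
elim: l s => [|l IH] [|x s] //=; rewrite ?in_cons ?eqxx //.
move=> Hs /andP[Hx Ha]; apply/orP; right.
apply/allpairsP; exists (x, s) => /=; split => //.
  by rewrite mem_iota; lia.
by apply: IH.
Qed.

Lemma size_le_sumn (s : seq nat) : all (fun x => 0 < x) s -> size s <= sumn s.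
Proof. elim: s => //= x s IH /andP[Hx /IH]; lia. Qed.

Lemma mem_le_sumn (s : seq nat) x : x \in s -> x <= sumn s.
Proof.
elim: s => //= y s IH; rewrite in_cons => /orP[/eqP ->|/IH]; lia.
Qed.

Lemma mem_partitions m s : (s \in partitions m) = is_part s && (sumn s == m).
Proof.
rewrite /partitions mem_undup mem_filter.
case Hp: (is_part s) => //; case Hm: (sumn s == m) => //=.
move/eqP: Hm => <-; apply: seqs_upto_mem.
  by apply: size_le_sumn; case/andP: Hp.
case/andP: Hp => _ /allP Hp; apply/allP => x Hx.
by rewrite Hp //= mem_le_sumn.
Qed.

Lemma count_bij (L : seq (seq nat)) (PA PB : pred (seq nat)) (F : seq nat -> seq nat) :
  uniq L ->
  (forall s, s \in L -> PA s -> F s \in L /\ PB (F s)) ->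
  (forall s1 s2, s1 \in L -> PA s1 -> s2 \in L -> PA s2 -> F s1 = F s2 -> s1 = s2) ->
  (forall t, t \in L -> PB t -> exists s, [/\ s \in L, PA s & F s = t]) ->
  count PA L = count PB L.
Proof.
move=> HL H1 H2 H3; rewrite -!size_filter; apply/eqP; rewrite eqn_leq.
apply/andP; split.
  rewrite -(size_map F); apply: uniq_leq_size.
    rewrite map_inj_in_uniq ?filter_uniq //.
    move=> s1 s2; rewrite !mem_filter => /andP[P1 L1] /andP[P2 L2].
    exact: H2.
  move=> t /mapP[s]; rewrite mem_filter => /andP[P1 L1] ->.
  by case: (H1 s L1 P1) => A B; rewrite mem_filter B A.
have -> : size [seq s <- L | PA s] = size (map F [seq s <- L | PA s]) by rewrite size_map.
apply: uniq_leq_size; first by rewrite filter_uniq.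
move=> t; rewrite mem_filter => /andP[Pt Lt].
case: (H3 t Lt Pt) => s [Ls Ps <-].
by apply: map_f; rewrite mem_filter Ps.
Qed.



Lemma bigmax_spec (Q : pred nat) n :
  (forall j, 1 <= j < n -> Q j -> j <= \max_(1 <= j < n | Q j) j) /\
  (\max_(1 <= j < n | Q j) j = 0 \/
   [/\ 1 <= \max_(1 <= j < n | Q j) j, \max_(1 <= j < n | Q j) j < n &
       Q (\max_(1 <= j < n | Q j) j)]).
Proof.
elim: n => [|n [IH1 IH2]].
  by rewrite big_geq //; split => [j|]; [lia | left].
case: n IH1 IH2 => [|n] IH1 IH2.
  by rewrite big_geq //; split => [j|]; [lia | left].
rewrite (big_mkcond Q) big_nat_recr // -big_mkcond /=.
set M := \max_(1 <= j < n.+1 | Q j) j in IH1 IH2 *.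
case HQ: (Q n.+1) => /=.
  split.
    move=> j Hj Qj; have HM : M < n.+1 by case: IH2 => [->|[]].
    rewrite (maxn_idPr (ltnW HM)). case: (ltnP j n.+1) => Hjn.
      have Hj2 : 1 <= j < n.+1 by lia.
      have := IH1 j Hj2 Qj; lia.
    lia.
  have HM : M < n.+1 by case: IH2 => [->|[]].
  right; rewrite (maxn_idPr (ltnW HM)); split => //; lia.
rewrite maxn0; split.
  move=> j Hj Qj; case: (ltnP j n.+1) => Hjn.
    by apply: IH1 => //; lia.
  have Ej : j = n.+1 by lia.
  by rewrite Ej HQ in Qj.
case: IH2 => [E|[A B C]]; [by left | right; split => //; lia].
Qed.

Lemma geq_refl : reflexive geq.
Proof. by move=> x; rewrite /= leqnn. Qed.

Lemma fr_spec mu :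
  [/\ frob_rank mu <= size mu,
      frob_rank mu = 0 \/ (0 < frob_rank mu /\ frob_rank mu <= nth 0 mu (frob_rank mu).-1) &
      forall j, frob_rank mu < j <= size mu -> nth 0 mu j.-1 < j].
Proof.
have [H1 H2] := bigmax_spec (fun j => j <= mu_at mu j) (size mu).+1.
rewrite /frob_rank; split.
- by case: H2 => [->|[_ ? _]] //; lia.
- by case: H2 => [->|[A _ C]]; [left | right].
- move=> j Hj; rewrite ltnNge; apply/negP => Qj.
  have := H1 j ltac:(lia) Qj; lia.
Qed.

Lemma frob_rank_eq mu r : r <= size mu ->
  (r = 0 \/ r <= nth 0 mu r.-1) ->
  (forall j, r < j <= size mu -> nth 0 mu j.-1 < j) -> frob_rank mu = r.
Proof.
move=> Hs Hr Ht.
have [H1 H2] := bigmax_spec (fun j => j <= mu_at mu j) (size mu).+1.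
rewrite /frob_rank; set M := \max_(1 <= j < (size mu).+1 | j <= mu_at mu j) j in H1 H2 *.
apply/eqP; rewrite eqn_leq; apply/andP; split.
  case: H2 => [->|[A B C]] //.
  rewrite leqNgt; apply/negP => Hlt.
  have HM : r < M <= size mu by lia.
  have := Ht _ HM; rewrite /mu_at in C; lia.
case: Hr => [->|Hr] //.
case: (posnP r) => [->|Hp] //.
by apply: H1 => //; lia.
Qed.

Section Part.
Variable mu : seq nat.
Hypothesis Hmu : is_part mu.
Let r := frob_rank mu.

Lemma part_sorted : sorted geq mu.
Proof. by case/andP: Hmu. Qed.

Lemma part_pos x : x \in mu -> 0 < x.
Proof. by case/andP: Hmu => _ /allP; apply. Qed.

Lemma fr_head i : i < r -> r <= nth 0 mu i.
Proof.
move=> Hi; have [A B C] := fr_spec mu; rewrite -/r in A B C.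
case: B => [E|[B1 B2]]; first lia.
apply: leq_trans B2 _.
have H := sorted_leq_nth geqT geq_refl 0 part_sorted.
apply: (H i r.-1); rewrite ?inE; lia.
Qed.

Lemma fr_tail i : r <= i -> nth 0 mu i <= r.
Proof.
move=> Hi; have [A B C] := fr_spec mu; rewrite -/r in A B C.
case: (ltnP i (size mu)) => Hs; last by rewrite nth_default.
have := C r.+1 ltac:(lia) => /= Hr.
have H := sorted_leq_nth geqT geq_refl 0 part_sorted.
have Hr' : r \in [pred n | n < size mu] by rewrite inE; lia.
have /= := H r i Hr' Hs Hi; lia.
Qed.

Lemma size_frob_row : size (frob_row mu) = r.
Proof. by rewrite size_map size_iota. Qed.

Lemma size_frob_col : size (frob_col mu) = r.
Proof. by rewrite size_map size_iota. Qed.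

Lemma frob_row_nth i : i < r -> nth 0 (frob_row mu) i = nth 0 mu i - i.+1.
Proof. by move=> Hi; rewrite (nth_map 0) ?size_iota // nth_iota. Qed.

Lemma frob_col_nth i : i < r -> nth 0 (frob_col mu) i = conj_at mu i.+1 - i.+1.
Proof. by move=> Hi; rewrite (nth_map 0) ?size_iota // nth_iota. Qed.

Lemma take_geq j x : j <= r -> x \in take r mu -> j <= x.
Proof.
move=> Hj /(nthP 0)[p]; rewrite size_take => Hp <-.
have Hpr : p < r.
  have [A _ _] := fr_spec mu; rewrite -/r in A.
  by move: Hp; case: ifP => HH H //; lia.
rewrite nth_take //; apply: leq_trans Hj (fr_head Hpr).
Qed.

Lemma drop_range x : x \in drop r mu -> 0 < x <= r.
Proof.
move=> Hx; rewrite part_pos; last by apply: mem_drop Hx.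
move: Hx => /(nthP 0)[p]; rewrite size_drop => Hp <-.
by rewrite nth_drop fr_tail // leq_addr.
Qed.

Lemma conj_split j : j <= r -> conj_at mu j = r + count (fun x => j <= x) (drop r mu).
Proof.
move=> Hj; rewrite /conj_at -{1}(cat_take_drop r mu) count_cat.
congr (_ + _); have [A _ _] := fr_spec mu; rewrite -/r in A.
rewrite -{2}(size_takel A); apply/eqP; rewrite -all_count; apply/allP => x.
exact: take_geq.
Qed.

End Part.



Lemma count_split j (s : seq nat) :
  count (fun x => j <= x) s = count_mem j s + count (fun x => j.+1 <= x) s.
Proof. elim: s => //= x s ->; case: (ltngtP j x) => H; lia. Qed.

Lemma count_zero (s : seq nat) (a : pred nat) :
  (forall x, x \in s -> ~~ a x) -> count a s = 0.
Proof.
move=> H; rewrite (eq_in_count (a2 := pred0)) ?count_pred0 // => x /H.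
by move/negbTE.
Qed.

Lemma geq_anti : antisymmetric geq.
Proof. by move=> x y /andP[H1 H2]; apply/eqP; rewrite eqn_leq; apply/andP; split. Qed.

Lemma sorted_count_eq r (s t : seq nat) : sorted geq s -> sorted geq t ->
  (forall x, x \in s -> 0 < x <= r) -> (forall x, x \in t -> 0 < x <= r) ->
  (forall j, 1 <= j <= r -> count (fun x => j <= x) s = count (fun x => j <= x) t) ->
  s = t.
Proof.
move=> Ss St Rs Rt Hc; apply: (sorted_eq geqT geq_anti) => //.
have Hc' : forall j, 0 < j -> count (fun x => j <= x) s = count (fun x => j <= x) t.
  move=> j Hj; case: (leqP j r) => Hjr; first by apply: Hc; lia.
  rewrite !count_zero // => x Hx /=; first [have := Rs x Hx | have := Rt x Hx]; lia.
rewrite /perm_eq; apply/allP => x _; apply/eqP.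
case: (posnP x) => [->|Hx].
  rewrite !count_zero // => y Hy /=; first [have := Rs y Hy | have := Rt y Hy]; lia.
have := count_split x s; have := count_split x t.
rewrite (Hc' x Hx) (Hc' x.+1 (ltn0Sn _)); lia.
Qed.

Lemma part_unique mu1 mu2 : is_part mu1 -> is_part mu2 ->
  frob_rank mu1 = frob_rank mu2 -> frob_row mu1 = frob_row mu2 ->
  frob_col mu1 = frob_col mu2 -> mu1 = mu2.
Proof.
move=> P1 P2 Er Erow Ecol.
have [A1 _ _] := fr_spec mu1; have [A2 _ _] := fr_spec mu2.
rewrite -Er in A2.
rewrite -(cat_take_drop (frob_rank mu1) mu1) -(cat_take_drop (frob_rank mu1) mu2).
congr (_ ++ _).
  apply: (@eq_from_nth _ 0); first by rewrite !size_takel.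
  rewrite size_takel // => i Hi; rewrite !nth_take //.
  have H1 := frob_row_nth Hi.
  have Hi2 : i < frob_rank mu2 by rewrite -Er.
  have H2 := frob_row_nth Hi2.
  have G1 := fr_head P1 Hi; have G2 := fr_head P2 Hi2.
  rewrite Erow H2 in H1; rewrite -Er in G2; lia.
apply: (@sorted_count_eq (frob_rank mu1)).
- exact: drop_sorted (part_sorted P1).
- exact: drop_sorted (part_sorted P2).
- by move=> x; apply: drop_range.
- by rewrite Er => x; apply: drop_range.
move=> j Hj.
have Hj1 : j.-1 < frob_rank mu1 by lia.
have Hj2 : j.-1 < frob_rank mu2 by rewrite -Er; lia.
have H1 := frob_col_nth Hj1; have H2 := frob_col_nth Hj2.
rewrite Ecol H2 in H1.
have Hj1' : j <= frob_rank mu1 by lia.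
have Hj2' : j <= frob_rank mu2 by rewrite -Er; lia.
have C1 := conj_split P1 Hj1'.
have C2 := conj_split P2 Hj2'.
rewrite -Er in C2.
have E : j.-1.+1 = j by lia.
rewrite E C1 C2 in H1; lia.
Qed.



Lemma tele (f : nat -> nat) m n : m <= n ->
  (forall i, m <= i < n -> f i.+1 <= f i) ->
  \sum_(m <= i < n) (f i - f i.+1) + f n = f m.
Proof.
elim: n => [|n IH] Hmn Hf.
  have -> : m = 0 by lia.
  by rewrite big_geq.
case: (ltnP m n.+1) => H; last first.
  have -> : m = n.+1 by lia.
  by rewrite big_geq.
rewrite big_nat_recr //= -addnA subnK; last by apply: Hf; lia.
apply: IH => // i Hi; apply: Hf; lia.
Qed.

Lemma abel (G B : nat -> nat) n :
  (forall i, i < n -> B i.+1 <= B i) -> (forall i, i < n -> G i <= G i.+1) ->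
  \sum_(0 <= i < n) G i.+1 * (B i - B i.+1) + G n * B n =
  \sum_(0 <= i < n) (G i.+1 - G i) * B i + G 0 * B 0.
Proof.
elim: n => [|n IH] HB HG; first by rewrite !big_geq.
rewrite !big_nat_recr //=.
have IH' := IH (fun i Hi => HB i (ltnW Hi)) (fun i Hi => HG i (ltnW Hi)).
have B1 := HB n (ltnSn n); have G1 := HG n (ltnSn n).
have E1 : G n.+1 * (B n - B n.+1) + G n.+1 * B n.+1 = G n.+1 * B n.
  by rewrite -mulnDr subnK.
have E2 : (G n.+1 - G n) * B n = G n.+1 * B n - G n * B n by rewrite mulnBl.
have E3 : G n * B n <= G n.+1 * B n by rewrite leq_mul2r G1 orbT.
rewrite -addnA E1 E2; lia.
Qed.

Lemma sumn_nth (s : seq nat) : sumn s = \sum_(0 <= i < size s) nth 0 s i.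
Proof. by rewrite -{1}(mkseq_nth 0 s) /mkseq sumnE big_map /index_iota subn0. Qed.

Lemma sum_succ n : (\sum_(0 <= i < n) i.+1) * 2 = n * n + n.
Proof.
elim: n => [|n IH]; first by rewrite big_geq.
rewrite big_nat_recr //= mulnDl IH; nia.
Qed.

Definition Bf (b : seq nat) r i := if i < r then nth 0 b i + i.+1 else r.
Definition tailb (b : seq nat) r :=
  flatten [seq nseq (Bf b r i - Bf b r i.+1) i.+1 | i <- rev (iota 0 r)].
Definition headb (a : seq nat) := [seq nth 0 a i + i.+1 | i <- iota 0 (size a)].
Definition build (a b : seq nat) := headb a ++ tailb b (size a).

Section Build.
Variables a b : seq nat.
Hypothesis Ha : sorted gtn a.
Hypothesis Hb : sorted gtn b.
Hypothesis Hs : size b = size a.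
Local Notation r := (size a).

Lemma Bf_dec i : i < r -> Bf b r i.+1 <= Bf b r i.
Proof.
move=> Hi; rewrite /Bf Hi; case: ifP => H.
  have := strict_step Hb (i := i) ltac:(rewrite Hs; lia); lia.
lia.
Qed.

Lemma tail_elem x : x \in tailb b r -> 0 < x <= r.
Proof.
move=> /flatten_mapP[i]; rewrite mem_rev mem_iota => Hi.
rewrite mem_nseq => /andP[_ /eqP ->]; lia.
Qed.

Lemma size_headb : size (headb a) = r.
Proof. by rewrite size_map size_iota. Qed.

Lemma nth_headb i : i < r -> nth 0 (headb a) i = nth 0 a i + i.+1.
Proof. by move=> Hi; rewrite (nth_map 0) ?size_iota // nth_iota. Qed.

Lemma head_elem x : x \in headb a -> r <= x.
Proof.
move=> /mapP[i]; rewrite mem_iota => Hi ->.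
have := strict_gap Ha (i := i) ltac:(lia); lia.
Qed.

Lemma sum_tail_eq (F : nat -> nat) :
  \sum_(i <- rev (iota 0 r)) F i = \sum_(0 <= i < r) F i.
Proof. by rewrite big_rev /index_iota subn0. Qed.

Lemma count_tail j : 1 <= j <= r ->
  count (fun x => j <= x) (tailb b r) + r = nth 0 b j.-1 + j.
Proof.
move=> Hj; rewrite /tailb count_flatten -map_comp sumnE big_map sum_tail_eq.
rewrite (@big_cat_nat _ _ _ j.-1) /=; [|lia|lia].
rewrite big_nat_cond big1 ?add0n; last first.
  move=> i /andP[/andP[_ Hi] _]; rewrite count_nseq /=.
  have -> : (j <= i.+1) = false by lia.
  done.
rewrite (eq_big_nat _ _ (F2 := fun i => Bf b r i - Bf b r i.+1)); last first.
  move=> i Hi; rewrite count_nseq /=.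
  have -> : (j <= i.+1) = true by lia.
  by rewrite mul1n.
have E : Bf b r r = r by rewrite /Bf ltnn.
have T : \sum_(j.-1 <= i < r) (Bf b r i - Bf b r i.+1) + Bf b r r = Bf b r j.-1.
  by apply: tele; [lia | move=> i Hi; apply: Bf_dec; lia].
rewrite E in T; rewrite T.
rewrite /Bf; have -> : (j.-1 < r) = true by lia.
lia.
Qed.

Lemma sorted_headb : sorted geq (headb a).
Proof.
apply/(sortedP 0) => i; rewrite size_headb => Hi.
rewrite !nth_headb; [|lia|lia].
have := strict_step Ha Hi; rewrite /=; lia.
Qed.

Lemma build_part : is_part (build a b).
Proof.
apply/andP; split.
  apply: sorted_cat_geq; first exact: sorted_headb.
    by apply: (@sorted_flat (fun i => i.+1)) => i j; lia.
  move=> x y /head_elem Hx /tail_elem Hy; lia.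
apply/allP => x; rewrite mem_cat => /orP[/mapP[i _ ->]|/tail_elem] //; lia.
Qed.

Lemma size_build_ge : r <= size (build a b).
Proof. by rewrite size_cat size_headb leq_addr. Qed.

Lemma nth_build_head i : i < r -> nth 0 (build a b) i = nth 0 a i + i.+1.
Proof. by move=> Hi; rewrite nth_cat size_headb Hi nth_headb. Qed.

Lemma build_rank : frob_rank (build a b) = r.
Proof.
apply: frob_rank_eq; first exact: size_build_ge.
  case: (posnP r) => [->|Hr]; [by left | right].
  rewrite nth_build_head; lia.
move=> j Hj; rewrite nth_cat size_headb.
have -> : (j.-1 < r) = false by lia.
have Hin : nth 0 (tailb b r) (j.-1 - r) \in tailb b r.
  apply: mem_nth; move: Hj; rewrite size_cat size_headb.
  set S := size (tailb _ _); lia.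
have := tail_elem Hin; lia.
Qed.

Lemma build_row : frob_row (build a b) = a.
Proof.
rewrite /frob_row build_rank.
rewrite -[RHS](mkseq_nth 0) /mkseq.
have -> : iota 1 r = map (addn 1) (iota 0 r) by rewrite -iotaDl.
rewrite -map_comp; apply/eq_in_map => i; rewrite mem_iota => Hi /=.
rewrite /mu_at nth_build_head /=; [|lia]. rewrite !add0n.
lia.
Qed.

Lemma conj_build j : 1 <= j <= r -> conj_at (build a b) j = nth 0 b j.-1 + j.
Proof.
move=> Hj; rewrite /conj_at count_cat -(count_tail Hj) addnC; congr (_ + _).
rewrite -{1}size_headb; apply/eqP; rewrite -all_count; apply/allP => x /head_elem.
lia.
Qed.

Lemma build_col : frob_col (build a b) = b.
Proof.
rewrite /frob_col build_rank.
rewrite -[RHS](mkseq_nth 0) /mkseq Hs.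
have -> : iota 1 r = map (addn 1) (iota 0 r) by rewrite -iotaDl.
rewrite -map_comp; apply/eq_in_map => i; rewrite mem_iota => Hi /=.
rewrite conj_build /=; [|lia]. rewrite !add0n; lia.
Qed.

Lemma build_sum : sumn (build a b) = r + sumn a + sumn b.
Proof.
have ET : sumn (tailb b r) = \sum_(0 <= i < r) i.+1 * (Bf b r i - Bf b r i.+1).
  rewrite /tailb sumn_flatten -map_comp sumnE big_map sum_tail_eq.
  by apply: eq_big_nat => i _ /=; rewrite sumn_nseq mulnC.
have EH : sumn (headb a) = \sum_(0 <= i < r) (nth 0 a i + i.+1).
  by rewrite /headb sumnE big_map /index_iota subn0.
rewrite sumn_cat ET EH (sumn_nth a) (sumn_nth b) Hs.
have Ab := @abel id (Bf b r) r (fun i Hi => Bf_dec Hi) (fun i _ => leqnSn i).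
rewrite /= mul0n addn0 in Ab.
rewrite (eq_big_nat _ _ (F1 := fun i => (i.+1 - i) * Bf b r i) (F2 := fun i => nth 0 b i + i.+1)) in Ab; last first.
  move=> i Hi; rewrite /Bf; have -> : (i < r) = true by lia.
  by rewrite subSnn mul1n.
have E : Bf b r r = r by rewrite /Bf ltnn.
rewrite E !big_split /= in Ab *.
have T := sum_succ r.
lia.
Qed.

End Build.



Definition cc k i := if k <= i then (2 * i).-1 else 2 * i.

Lemma lamE z1 z2 k r a : lam z1 z2 k r a =
  (z1 * (r - 1) + r) :: flatten [seq nseq (nth 0 a i.-1 - nth 0 a i) (cc k i) | i <- rev (iota 1 r)]
    ++ nseq z2 1.
Proof. by []. Qed.

Lemma cc_mono k i j : i <= j -> cc k i <= cc k j.
Proof. by rewrite /cc; case: ifP; case: ifP; lia. Qed.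

Lemma cc_strict k i j : 1 <= k -> i < j -> cc k i < cc k j.
Proof. by rewrite /cc; case: ifP; case: ifP; lia. Qed.

Lemma cc_inj k i j : 1 <= k -> cc k i = cc k j -> i = j.
Proof.
move=> Hk E; case: (ltngtP i j) => // H.
  by have := cc_strict Hk H; rewrite E ltnn.
by have := cc_strict Hk H; rewrite E ltnn.
Qed.

Lemma mem_flat_cc k (e : nat -> nat) r x :
  x \in flatten [seq nseq (e i) (cc k i) | i <- rev (iota 1 r)] ->
  exists2 i, 1 <= i <= r & x = cc k i.
Proof.
move=> /flatten_mapP[i]; rewrite mem_rev mem_iota => Hi.
rewrite mem_nseq => /andP[_ /eqP ->]; exists i => //; lia.
Qed.

Lemma lam_part z1 z2 k r a : 1 <= z1 -> 1 <= k <= r -> is_part (lam z1 z2 k r a).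
Proof.
move=> Hz Hk; rewrite lamE; apply/andP; split.
  rewrite (sorted_pairwise geqT) /= -(sorted_pairwise geqT); apply/andP; split.
    apply/allP => x; rewrite mem_cat => /orP[/mem_flat_cc[i Hi ->]|].
      rewrite /= /cc; case: ifP; nia.
    rewrite mem_nseq => /andP[_ /eqP ->] /=; nia.
  apply: sorted_cat_geq; first by apply: sorted_flat => i j; apply: cc_mono.
    exact: sorted_nseq_geq.
  move=> x y /mem_flat_cc[i Hi ->]; rewrite mem_nseq => /andP[_ /eqP ->].
  rewrite /cc; case: ifP; lia.
apply/allP => x; rewrite inE mem_cat => /orP[/eqP ->|/orP[/mem_flat_cc[i Hi ->]|]].
- by apply: ltn_addl; case/andP: Hk; apply: leq_trans.
- rewrite /cc; case: ifP; lia.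
- by rewrite mem_nseq => /andP[_ /eqP ->].
Qed.

Lemma count_neq (s : seq nat) x : uniq s -> x \in s ->
  count (fun i => i != x) s = (size s).-1.
Proof.
move=> Hu Hx; have := count_predC (pred1 x) s.
rewrite (count_uniq_mem _ Hu) Hx => <-; rewrite add1n /=.
by apply: eq_count => i.
Qed.

Lemma diffs_eq (a1 a2 : seq nat) r : size a1 = r -> size a2 = r ->
  sorted gtn a1 -> sorted gtn a2 ->
  (forall j, j < r -> nth 0 a1 j - nth 0 a1 j.+1 = nth 0 a2 j - nth 0 a2 j.+1) ->
  a1 = a2.
Proof.
move=> S1 S2 H1 H2 Hd.
have H : forall d, d <= r -> nth 0 a1 (r - d) = nth 0 a2 (r - d).
  elim=> [|d IH] Hd'.
    by rewrite subn0 !nth_default // ?S1 ?S2.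
  have E : (r - d.+1).+1 = r - d by lia.
  have := Hd (r - d.+1) ltac:(lia); rewrite E.
  have := weak_step (r - d.+1) H1; have := weak_step (r - d.+1) H2.
  rewrite E (IH ltac:(lia)); lia.
apply: (@eq_from_nth _ 0); first by rewrite S1 S2.
rewrite S1 => i Hi; have := H (r - i) ltac:(lia).
by have -> : r - (r - i) = i by lia.
Qed.

Definition betaof z1 z2 k (a : seq nat) :=
  sort geq (z2 :: [seq nth 0 a j.-1 + z1 | j <- [seq j <- iota 1 (size a) | j != k]]).

Lemma geq_total : total geq.
Proof. by move=> x y; rewrite /= leq_total. Qed.

Lemma betaof_ok z1 z2 k (a : seq nat) : z2 < z1 -> 1 <= k <= size a -> sorted gtn a ->
  sorted gtn (betaof z1 z2 k a) /\ size (betaof z1 z2 k a) = size a.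
Proof.
move=> Hz Hk Ha; split.
  rewrite gtn_sorted_uniq_geq sort_uniq sort_sorted ?andbT; last exact: geq_total.
  rewrite /= map_inj_in_uniq ?filter_uniq ?iota_uniq ?andbT //; last first.
  move=> i j; rewrite !mem_filter !mem_iota => /andP[_ Hi] /andP[_ Hj] E.
  have E' : nth 0 a i.-1 = nth 0 a j.-1 by lia.
  have HH := sorted_ltn_nth gtnT 0 Ha.
  have M1 : i.-1 \in [pred n | n < size a] by rewrite inE /=; lia.
  have M2 : j.-1 \in [pred n | n < size a] by rewrite inE /=; lia.
  case: (ltngtP i j) => // H.
    have := HH _ _ M1 M2 ltac:(lia); rewrite /= E'; lia.
  have := HH _ _ M2 M1 ltac:(lia); rewrite /= E'; lia.
  by apply/mapP => -[j _ E]; lia.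
rewrite size_sort /= size_map size_filter count_neq ?iota_uniq ?size_iota //.
  lia.
by rewrite mem_iota; lia.
Qed.

Lemma lam_sum z1 z2 k r a : 1 <= k -> size a = r -> sorted gtn a ->
  sumn (lam z1 z2 k r a) =
  z1 * (r - 1) + r + \sum_(i <- iota 0 r) (cc k i.+1 - cc k i) * nth 0 a i + z2.
Proof.
move=> Hk Hs Ha.
have EF : sumn (flatten [seq nseq (nth 0 a i.-1 - nth 0 a i) (cc k i) | i <- rev (iota 1 r)])
    = \sum_(0 <= i < r) cc k i.+1 * (nth 0 a i - nth 0 a i.+1).
  rewrite sumn_flatten -map_comp sumnE big_map big_rev.
  have -> : iota 1 r = map (addn 1) (iota 0 r) by rewrite -iotaDl.
  rewrite big_map /index_iota subn0; apply: eq_bigr => i _ /=.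
  by rewrite sumn_nseq mulnC add1n.
rewrite lamE /= sumn_cat sumn_nseq mul1n EF.
have Ab := @abel (cc k) (nth 0 a) r (fun i _ => weak_step i Ha) (fun i _ => cc_mono k (leqnSn i)).
rewrite (nth_default 0 (_ : size a <= r)) ?Hs // muln0 addn0 in Ab.
have E0 : cc k 0 = 0 by rewrite /cc; case: ifP; lia.
rewrite E0 mul0n addn0 in Ab.
rewrite Ab /index_iota subn0; lia.
Qed.

Lemma lam_build_sum z1 z2 k r a : z2 < z1 -> 1 <= k <= r -> size a = r -> sorted gtn a ->
  sumn (lam z1 z2 k r a) = sumn (build a (betaof z1 z2 k a)).
Proof.
move=> Hz Hk Hs Ha.
have Hk' : 1 <= k <= size a by rewrite Hs.
have [Sb Zb] := betaof_ok Hz Hk' Ha.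
rewrite build_sum // lam_sum //; last by case/andP: Hk.
set R := \sum_(i <- iota 0 r | i != k.-1) nth 0 a i.
have Hm : k.-1 \in iota 0 r by rewrite mem_iota; lia.
have F1 : \sum_(i <- iota 0 r) (cc k i.+1 - cc k i) * nth 0 a i = nth 0 a k.-1 + 2 * R.
  rewrite (bigD1_seq k.-1) ?iota_uniq //=.
  have -> : cc k k.-1.+1 - cc k k.-1 = 1 by rewrite /cc; case: ifP; case: ifP; lia.
  rewrite mul1n /R big_distrr /=; congr (_ + _); apply: eq_bigr => i Hi.
  have -> : cc k i.+1 - cc k i = 2 by rewrite /cc; case: ifP; case: ifP; lia.
  done.
have F2 : sumn a = nth 0 a k.-1 + R.
  by rewrite sumn_nth Hs /index_iota subn0 (bigD1_seq k.-1) ?iota_uniq.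
have F3 : sumn (betaof z1 z2 k a) = z2 + R + z1 * (r - 1).
  rewrite /betaof; set s0 := (z2 :: _).
  have -> : sumn (sort geq s0) = sumn s0 by apply: perm_sumn; rewrite perm_sort.
  rewrite /= sumnE big_map big_filter Hs.
  have -> : iota 1 r = map (addn 1) (iota 0 r) by rewrite -iotaDl.
  rewrite big_map (eq_bigl (fun i => i != k.-1)); last first.
    by move=> i /=; rewrite add1n; congr (~~ _); apply/eqP/eqP; lia.
  rewrite (eq_bigr (fun i => nth 0 a i + z1)); last by move=> i _; rewrite add1n.
  rewrite big_split /= -/R big_const_seq iter_addn_0 count_neq ?iota_uniq // size_iota.
  lia.
rewrite F1 F2 F3; lia.
Qed.

Lemma count_lam_tail k z2 r (a : seq nat) j : 1 <= k -> 1 <= j <= r ->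
  count (pred1 (cc k j))
    (flatten [seq nseq (nth 0 a i.-1 - nth 0 a i) (cc k i) | i <- rev (iota 1 r)] ++ nseq z2 1)
  = (nth 0 a j.-1 - nth 0 a j) + (1 == cc k j) * z2.
Proof.
move=> Hk Hj; rewrite count_cat count_nseq count_flatten -map_comp sumnE big_map big_rev.
rewrite (bigD1_seq j) ?iota_uniq ?mem_iota /=; last lia.
rewrite count_nseq /= eqxx mul1n big1 ?addn0 // => i Hi.
rewrite count_nseq /=.
case: eqP => [/(cc_inj Hk) E|]; last by rewrite mul0n.
by rewrite E eqxx in Hi.
lia.
Qed.

Lemma lam_inj z1 z2 k r1 r2 a1 a2 : 1 <= k <= r1 -> k <= r2 ->
  size a1 = r1 -> size a2 = r2 -> sorted gtn a1 -> sorted gtn a2 ->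
  lam z1 z2 k r1 a1 = lam z1 z2 k r2 a2 -> r1 = r2 /\ a1 = a2.
Proof.
move=> Hk1 Hk2 S1 S2 H1 H2; rewrite !lamE => -[Eh Et].
have Er : r1 = r2.
  case: (ltngtP r1 r2) => // H; exfalso.
    have : z1 * (r1 - 1) <= z1 * (r2 - 1) by rewrite leq_mul2l; apply/orP; right; lia.
    lia.
  have : z1 * (r2 - 1) <= z1 * (r1 - 1) by rewrite leq_mul2l; apply/orP; right; lia.
  lia.
rewrite -Er in S2 Hk2 Et *; split => //.
apply: (diffs_eq S1 S2 H1 H2) => j Hj.
have Hk : 1 <= k by case/andP: Hk1.
have Hj' : 1 <= j.+1 <= r1 by lia.
have := @count_lam_tail k z2 r1 a1 j.+1 Hk Hj'.
have := @count_lam_tail k z2 r1 a2 j.+1 Hk Hj'.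
rewrite Et /= => ->; lia.
Qed.



Lemma asym_build z1 z2 k (s : seq nat) : z2 < z1 -> is_part s -> asym z1 z2 k s ->
  [/\ sorted gtn (frob_row s), size (frob_row s) = frob_rank s, 1 <= k <= size (frob_row s),
      frob_col s = betaof z1 z2 k (frob_row s) & s = build (frob_row s) (betaof z1 z2 k (frob_row s))].
Proof.
move=> Hz Ps [Hkr [alpha [Sa Za Ra Ca]]].
rewrite Ra; have Ca' : frob_col s = betaof z1 z2 k alpha := Ca.
have Hk' : 1 <= k <= size alpha by rewrite Za.
have [Sb Zb] := betaof_ok Hz Hk' Sa.
split => //.
apply: part_unique => //.
- exact: build_part.
- by rewrite build_rank.
- by rewrite build_row.
- by rewrite build_col.
Qed.

Unset Implicit Arguments.
Set Strict Implicit.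

Theorem proposition6p1 (z1 z2 k m : nat) :
  z2 < z1 -> 1 <= k ->
  npart m (asym z1 z2 k) = npart m (lam_form z1 z2 k).
Proof.
move=> Hz Hk; rewrite /npart.
have Hz1 : 1 <= z1 by lia.
apply: (@count_bij _ _ _ (fun mu => lam z1 z2 k (frob_rank mu) (frob_row mu))).
- exact: undup_uniq.
- move=> s; rewrite mem_partitions => /andP[Ps /eqP Sm] /asboolP As.
  have [Sa Za Hk' Ca Eb] := asym_build Hz Ps As.
  rewrite -Za; split.
    rewrite mem_partitions (lam_part _ _ Hz1 Hk') andTb.
    by rewrite (lam_build_sum Hz Hk' (erefl _) Sa) -Eb Sm.
  apply/asboolP; exists (size (frob_row s)), (frob_row s); split => //.
  by case/andP: Hk'.
- move=> s1 s2; rewrite !mem_partitions => /andP[P1 _] /asboolP A1 /andP[P2 _] /asboolP A2 E.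
  have [Sa1 Za1 Hk1 Ca1 Eb1] := asym_build Hz P1 A1.
  have [Sa2 Za2 Hk2 Ca2 Eb2] := asym_build Hz P2 A2.
  rewrite -Za1 -Za2 in E.
  have [Er Ea] := lam_inj Hk1 (proj2 (andP Hk2)) (erefl _) (erefl _) Sa1 Sa2 E.
  by rewrite Eb1 Eb2 Ea.
- move=> t; rewrite mem_partitions => /andP[Pt /eqP Sm] /asboolP [r [a [Hkr Sa Sta Et]]].
  have Hk' : 1 <= k <= size a by rewrite Sa Hk.
  have [Sb Zb] := betaof_ok Hz Hk' Sta.
  exists (build a (betaof z1 z2 k a)); split.
  + rewrite mem_partitions build_part //=.
    have Hkr' : 1 <= k <= r by rewrite Hk Hkr.
    by rewrite -(lam_build_sum Hz Hkr' Sa Sta) -Et Sm.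
  + apply/asboolP; split; first by rewrite build_rank // Hk.
    exists a; split => //.
    * by rewrite build_rank.
    * by rewrite build_row.
    * by rewrite build_col.
  + by rewrite build_rank // build_row // Sa Et.
Qed.
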